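(* Let $d\ge2$ be an integer and consider the cone percolation process with radius of influence $R$ on the homogeneous tree $\mathbb{T}_d$, with law $\mathbb{P}$ and survival event $V$. Let $\rho$ be the smallest non-negative root of $\mathbb{E}(\rho^{d^R})+(1-\rho)p_0=\rho$ and $\psi$ the smallest non-negative root of $\mathbb{E}\big(\psi^{\sum_{m=1}^{R}d^m}\big)=\psi$ (an empty sum being $0$). Then $$1-\big(1-\rho^{\frac{d+1}{d}}\big)p_0-\mathbb{E}\Big(\rho^{\frac{d+1}{d}d^R}\Big)\ \le\ \mathbb{P}(V)\ \le\ 1-\mathbb{E}\Big(\psi^{\frac{d+1}{d-1}(d^R-1)}\Big).$$
   Context: Cone percolation process: Let $\mathbb{T}$ be a tree with origin $\mathcal{O}$ and graph distance $d(\cdot,\cdot)$. Write $u\le v$ if $u$ lies on the path from $\mathcal{O}$ to $v$. Let $R$ be a random variable with values in $\{0,1,2,\dots\}$, $p_k=\mathbb{P}(R=k)$, and assume $p_0\in(0,1)$. Let $\{R_v\}$ be i.i.d. copies of $R$ indexed by the vertices. For each vertex $u$ let $B_u=\{v: u\le v,\ d(u,v)\le R_u\}$. Set $I_0=\{\mathcal{O}\}$, $I_{n+1}=\bigcup_{u\in I_n}B_u$, $I=\bigcup_n I_n$; survival is the event $V=\{|I|=\infty\}$. $\mathbb{T}_d$ is the tree in which every vertex has degree $d+1$, with origin $\mathcal{O}$. *)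

(* Defs.v *)
From HB Require Import structures.
From mathcomp Require Import all_boot all_order all_algebra.
From mathcomp Require Import all_classical all_reals all_analysis.
Set Implicit Arguments. Unset Strict Implicit. Unset Printing Implicit Defensive.
Import Order.TTheory GRing.Theory Num.Theory.
Local Open Scope classical_set_scope.
Local Open Scope ring_scope.

(* Vertices of the homogeneous tree T_d (every vertex of degree d+1), rooted at
   the origin O = [::].  A vertex is the sequence of child indices along the
   path from O: the first step chooses one of the d+1 neighbours of O, every
   later step one of the d children (the remaining neighbour is the parent). *)
Definition valid_vtx (d : nat) (v : seq nat) : bool :=
  match v with
  | [::] => true
  | a :: s => (a < d.+1)%N && all (fun i => (i < d)%N) s
  end.

Definition vtx (d : nat) := {v : seq nat | valid_vtx d v}.

Definition origin (d : nat) : vtx d := exist _ [::] erefl.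

(* u <= v : u lies on the path from O to v;  then d(u,v) = |v| - |u|. *)
Definition tree_le (d : nat) (u v : vtx d) : bool := prefix (val u) (val v).
Definition tree_dist_down (d : nat) (u v : vtx d) : nat := (size (val v) - size (val u))%N.

Definition cone (d : nat) (r : vtx d -> nat) (u : vtx d) : set (vtx d) :=
  [set v | tree_le u v /\ (tree_dist_down u v <= r u)%N].

Fixpoint Ilevel (d : nat) (r : vtx d -> nat) (n : nat) : set (vtx d) :=
  match n with
  | 0 => [set origin d]
  | n'.+1 => \bigcup_(u in Ilevel r n') cone r u
  end.

Definition cluster (d : nat) (r : vtx d -> nat) : set (vtx d) :=
  \bigcup_(n in [set: nat]) Ilevel r n.

Definition survival (d : nat) (T : Type) (Rv : vtx d -> T -> nat) : set T :=
  [set w | ~ finite_set (cluster (fun v => Rv v w))].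

(* E(f(R)) for R with law p, as an extended-real series of nonnegative terms *)
Definition Eg (R : realType) (p : nat -> R) (f : nat -> R) : \bar R :=
  (\sum_(0 <= k <oo) ((p k * f k)%:E))%E.

(* Main.v *)
Require Import Defs.
From HB Require Import structures.
From mathcomp Require Import all_boot all_order all_algebra.
From mathcomp Require Import all_classical all_reals all_analysis.
From mathcomp Require Import zify ring lra.
Import Order.TTheory GRing.Theory Num.Theory.
Local Open Scope classical_set_scope.
Local Open Scope ring_scope.
Set Implicit Arguments. Unset Strict Implicit. Unset Printing Implicit Defensive.

Section Indep.
Context (R : realType) (dsp : measure_display) (T : measurableType dsp)
  (P : probability T R) (d : nat) (p : nat -> R) (Rv : vtx d -> T -> nat).
Hypothesis hmeas : forall v k, measurable [set w | Rv v w = k].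
Hypothesis hpk : forall v k, P [set w | Rv v w = k] = (p k)%:E.
Hypothesis hind : forall (s : seq (vtx d)), uniq s -> forall k : vtx d -> nat,
     P (\bigcap_(v in [set` s]) [set w | Rv v w = k v]) = (\prod_(v <- s) p (k v))%:E.

Definition ev (Q : (vtx d -> nat) -> Prop) : set T := [set w | Q (fun v => Rv v w)].
Definition upd (k : vtx d -> nat) (s : seq (vtx d)) (r : vtx d -> nat) :=
  fun u => if u \in s then r u else k u.
Definition setk (k : vtx d -> nat) v j := fun u => if u == v then j else k u.
Definition cyl (t : seq (vtx d)) k := \bigcap_(v in [set` t]) [set w | Rv v w = k v].

Lemma cyl_nil k : cyl [::] k = setT.
Proof. by apply/seteqP; split=> w //= _ v. Qed.

Lemma cyl_cons v t k : cyl (v :: t) k = [set w | Rv v w = k v] `&` cyl t k.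
Proof.
apply/seteqP; split=> w /=.
  by move=> H; split; [apply: H; rewrite /= inE eqxx | move=> u ut; apply: H; rewrite /= inE ut orbT].
by move=> [H1 H2] u; rewrite /= inE => /orP[/eqP->//|ut]; apply: H2.
Qed.

Lemma cyl_meas t k : measurable (cyl t k).
Proof.
elim: t => [|v t IH]; first by rewrite cyl_nil.
by rewrite cyl_cons; apply: measurableI.
Qed.

Lemma cyl_setk t k v j : v \notin t -> cyl t (setk k v j) = cyl t k.
Proof.
elim: t => [|u t IH]; first by rewrite !cyl_nil.
rewrite inE negb_or => /andP[vu vt]; rewrite !cyl_cons IH //.
by rewrite /setk eq_sym (negbTE vu).
Qed.

Lemma upd_cons k v s r j : r v = j -> upd k (v :: s) r = upd (setk k v j) s r.
Proof.
move=> rv; apply/funext => u; rewrite /upd /setk inE.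
by case: (eqVneq u v) => [->|uv] /=; case: (_ \in s).
Qed.

Lemma upd_nil k r : upd k [::] r = k.
Proof. by apply/funext. Qed.

Lemma ev_decomp Q k v s X :
  ev (fun r => Q (upd k (v :: s) r)) `&` X =
  \bigcup_j (ev (fun r => Q (upd (setk k v j) s r)) `&` ([set w | Rv v w = j] `&` X)).
Proof.
apply/seteqP; split=> w /=.
  move=> [H Xw]; exists (Rv v w) => //; split => //.
  by rewrite /ev /= -(@upd_cons k v s _ _ (erefl _)).
move=> [j _ [H [rj Xw]]]; split => //.
by rewrite /ev /= (@upd_cons k v s _ _ rj).
Qed.

Lemma triv_decomp (A : nat -> set T) v :
  trivIset setT (fun j => A j `&` [set w | Rv v w = j]).
Proof.
move=> i j _ _ [w [[_ /= Hi] [_ /= Hj]]]; by rewrite -Hi -Hj.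
Qed.

Lemma ev_const_meas (Q : Prop) : measurable (ev (fun _ => Q)).
Proof.
have [HQ|HQ] := pselect Q.
  by rewrite (_ : ev _ = setT) //; apply/seteqP; split=> w.
by rewrite (_ : ev _ = set0) //; apply/seteqP; split=> w.
Qed.

Lemma ev_upd_meas Q s k : measurable (ev (fun r => Q (upd k s r))).
Proof.
elim: s k => [|v s IH] k.
  rewrite (_ : ev _ = ev (fun _ => Q k)); first exact: ev_const_meas.
  by apply/seteqP; split=> w; rewrite /ev /= upd_nil.
rewrite -[ev _]setIT ev_decomp; apply: bigcupT_measurable => j.
by apply: measurableI => //; apply: measurableI.
Qed.

Lemma P_decomp Q k v s X : measurable X ->
  P (ev (fun r => Q (upd k (v :: s) r)) `&` X) =
  (\sum_(0 <= j <oo) P (ev (fun r => Q (upd (setk k v j) s r)) `&` ([set w | Rv v w = j] `&` X)))%E.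
Proof.
move=> mX; rewrite ev_decomp; apply/esym/cvg_lim => //.
apply: measure_sigma_additive.
  by move=> j; apply: measurableI; [exact: ev_upd_meas| exact: measurableI].
move=> i j _ _ [w [[_ [/= Hi _]] [_ [/= Hj _]]]]; by rewrite -Hi -Hj.
Qed.


Lemma p_ge0 k : 0 <= p k.
Proof.
have H1 : (0 <= P [set w | Rv (origin d) w = k])%E by apply: measure_ge0.
have H2 := hpk (origin d) k.
by move: H1; rewrite H2 lee_fin.
Qed.

Lemma P_cyl t k : uniq t -> P (cyl t k) = (\prod_(v <- t) p (k v))%:E.
Proof. by move=> ut; rewrite /cyl hind. Qed.

Lemma cyl_v_setk t k v j : v \notin t ->
  [set w | Rv v w = j] `&` cyl t k = cyl (v :: t) (setk k v j).
Proof. by move=> vt; rewrite cyl_cons cyl_setk // /setk eqxx. Qed.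

Lemma indepA s t Q k : uniq (s ++ t) ->
  P (ev (fun r => Q (upd k s r)) `&` cyl t k) =
  (P (ev (fun r => Q (upd k s r))) * (\prod_(v <- t) p (k v))%:E)%E.
Proof.
elim: s t k => [|v s IH] t k Hu.
  rewrite (_ : ev _ = ev (fun _ => Q k)); last first.
    by apply/seteqP; split=> w; rewrite /ev /= upd_nil.
  have [HQ|HQ] := pselect (Q k).
    rewrite (_ : ev _ = setT); last by apply/seteqP; split=> w.
    by rewrite setTI P_cyl // probability_setT mul1e.
  rewrite (_ : ev _ = set0); last by apply/seteqP; split=> w.
  by rewrite set0I measure0 mul0e.
move: Hu; rewrite cat_cons /= => /andP[vst ust].
have vs : v \notin s by move: vst; rewrite mem_cat negb_or => /andP[].
have vt : v \notin t by move: vst; rewrite mem_cat negb_or => /andP[].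
rewrite P_decomp; last exact: cyl_meas.
rewrite -[ev (fun r => Q (upd k (v :: s) r))]setIT P_decomp //.
rewrite muleC -nneseriesZl; last first.
  by move=> i _; apply: measure_ge0.
apply: eq_eseriesr => j _.
rewrite cyl_v_setk // IH; last by rewrite -cat1s uniq_catCA /= vst.
rewrite -(cyl_nil k) cyl_v_setk // IH; last first.
  have us : uniq s by move: ust; rewrite cat_uniq => /and3P[].
  by rewrite uniq_catC /= vs us.
rewrite !big_cons big_nil /setk eqxx mulr1.
rewrite (@eq_big_seq _ _ _ _ _ (fun u => p (if u == v then j else k u)) (fun u => p (k u))); last first.
  by move=> u ut /=; case: eqP => // uv; rewrite -uv ut in vt.
by rewrite EFinM muleA muleC.
Qed.


Definition dep (s : seq (vtx d)) (Q : (vtx d -> nat) -> Prop) :=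
  forall r r', {in s, r =1 r'} -> Q r -> Q r'.

Lemma dep_undup s Q : dep s Q -> dep (undup s) Q.
Proof. by move=> H r r' E; apply: H => u us; apply: E; rewrite mem_undup. Qed.

Lemma dep_sub s s' Q : {subset s <= s'} -> dep s Q -> dep s' Q.
Proof. by move=> ss H r r' E; apply: H => u us; apply: E; apply: ss. Qed.

Lemma ev_dep s Q k : dep s Q -> ev Q = ev (fun r => Q (upd k s r)).
Proof.
move=> H; apply/seteqP; split=> w; rewrite /ev /=; apply: H => u us;
  by rewrite /upd us.
Qed.

Lemma ev_dep_meas s Q : dep s Q -> measurable (ev Q).
Proof. by move=> H; rewrite (ev_dep (fun _ => 0%N) H); exact: ev_upd_meas. Qed.

Lemma PE A : measurable A -> P A = (fine (P A))%:E.
Proof. by move=> mA; rewrite fineK // fin_num_measure. Qed.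

Lemma uniq_cat_disj (s1 s : seq (vtx d)) : uniq s1 -> uniq s ->
  (forall u, u \in s1 -> u \notin s) -> uniq (s1 ++ s).
Proof.
move=> u1 u2 H; rewrite cat_uniq u1 u2 andbT /=; apply/hasPn => u us.
by apply/negP => /H; rewrite us.
Qed.

Lemma indepB s1 Q1 Q2 s2 t k : dep s1 Q1 -> uniq s1 -> uniq (s2 ++ t) ->
  (forall u, u \in s1 -> u \notin s2 ++ t) ->
  P (ev Q1 `&` ev (fun r => Q2 (upd k s2 r)) `&` cyl t k) =
  (P (ev Q1 `&` cyl t k) * P (ev (fun r => Q2 (upd k s2 r))))%E.
Proof.
move=> D1 u1; elim: s2 t k => [|v s2 IH] t k Hu Hd.
  rewrite (_ : ev (fun r => Q2 (upd k [::] r)) = ev (fun _ => Q2 k)); last first.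
    by apply/seteqP; split=> w; rewrite /ev /= upd_nil.
  have [HQ|HQ] := pselect (Q2 k).
    rewrite (_ : ev (fun _ => Q2 k) = setT); last by apply/seteqP; split=> w.
    by rewrite setIT probability_setT mule1.
  rewrite (_ : ev (fun _ => Q2 k) = set0); last by apply/seteqP; split=> w.
  by rewrite setI0 set0I measure0 mule0.
move: Hu; rewrite cat_cons /= => /andP[vst ust].
have vs : v \notin s2 by move: vst; rewrite mem_cat negb_or => /andP[].
have vt : v \notin t by move: vst; rewrite mem_cat negb_or => /andP[].
have ut : uniq t by move: ust; rewrite cat_uniq => /and3P[].
have us2 : uniq s2 by move: ust; rewrite cat_uniq => /and3P[].
have H1t : forall u, u \in s1 -> u \notin t.
  by move=> u /Hd; rewrite mem_cat negb_or => /andP[_ ->].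
have H1vt : forall u, u \in s1 -> u \notin v :: t.
  move=> u /Hd; rewrite mem_cat negb_or inE negb_or => /andP[/andP[uv _] ut'].
  by rewrite inE negb_or uv ut'.
have mQ1 := ev_dep_meas D1.
rewrite -setIA [ev Q1 `&` _]setIC -setIA.
rewrite P_decomp; last by apply: measurableI => //; exact: cyl_meas.
rewrite -[ev (fun r => Q2 (upd k (v :: s2) r))]setIT P_decomp //.
rewrite (PE (measurableI _ _ mQ1 (cyl_meas t k))) -nneseriesZl; last first.
  by move=> i _; apply: measure_ge0.
apply: eq_eseriesr => j _.
rewrite (_ : _ `&` (_ `&` (cyl t k `&` ev Q1)) =
  ev Q1 `&` ev (fun r => Q2 (upd (setk k v j) s2 r)) `&` cyl (v :: t) (setk k v j)); last first.
  by rewrite -cyl_v_setk //; apply/seteqP; split=> w /=; tauto.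
rewrite IH; last first.
  move=> u /Hd; rewrite !mem_cat !inE !negb_or => /andP[/andP[? ?] ?].
  by apply/and3P.
  by rewrite -cat1s uniq_catCA /= vst.
rewrite -(cyl_nil k) cyl_v_setk //.
have E1 : P (ev Q1 `&` cyl (v :: t) (setk k v j)) =
    (P (ev Q1) * (p j * \prod_(u <- t) p (k u))%:E)%E.
  rewrite (ev_dep (setk k v j) D1) indepA; last by apply: uniq_cat_disj => //=; rewrite vt ut.
  rewrite -(ev_dep _ D1) big_cons /setk eqxx.
  rewrite (@eq_big_seq _ _ _ _ _ (fun u => p (if u == v then j else k u)) (fun u => p (k u))) //.
  by move=> u ut' /=; case: eqP => // uv; rewrite -uv ut' in vt.
have E2 : P (ev Q1 `&` cyl t k) = (P (ev Q1) * (\prod_(u <- t) p (k u))%:E)%E.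
  by rewrite (ev_dep k D1) indepA; last by apply: uniq_cat_disj.
have E3 : P (ev (fun r => Q2 (upd (setk k v j) s2 r)) `&` cyl [:: v] (setk k v j)) =
    (P (ev (fun r => Q2 (upd (setk k v j) s2 r))) * (p j)%:E)%E.
  rewrite indepA; last by rewrite uniq_catC /= vs us2.
  by rewrite big_cons big_nil /setk eqxx mulr1.
rewrite E1 E3 E2 (PE mQ1) -EFinM /= !EFinM.
rewrite -!muleA; congr (_ * _)%E.
by rewrite muleC -muleA.
Qed.


Lemma indep s1 Q1 s2 Q2 : dep s1 Q1 -> dep s2 Q2 ->
  (forall u, u \in s1 -> u \notin s2) ->
  P (ev Q1 `&` ev Q2) = (P (ev Q1) * P (ev Q2))%E.
Proof.
move=> D1 D2 H.
have D1' := dep_undup D1; have D2' := dep_undup D2.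
rewrite (ev_dep (fun _ => 0%N) D2') -[_ `&` _]setIT -(cyl_nil (fun _ => 0%N)).
rewrite (indepB (s1 := undup s1)) //; first by rewrite cyl_nil setIT.
- exact: undup_uniq.
- by rewrite cats0 undup_uniq.
- by move=> u; rewrite cats0 !mem_undup; exact: H.
Qed.

Lemma indep_list (I : seq nat) (Qs : nat -> (vtx d -> nat) -> Prop)
  (ss : nat -> seq (vtx d)) : uniq I ->
  (forall i, i \in I -> dep (ss i) (Qs i)) ->
  (forall i j u, i \in I -> j \in I -> i != j -> u \in ss i -> u \notin ss j) ->
  P (ev (fun r => forall i, i \in I -> Qs i r)) =
  (\prod_(i <- I) fine (P (ev (Qs i))))%:E.
Proof.
elim: I => [|i I IH] /=.
  move=> _ _ _; rewrite big_nil (_ : ev _ = setT) ?probability_setT //.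
  by apply/seteqP; split=> w.
move=> /andP[iI uI] HD Hdis.
rewrite (_ : ev _ = ev (Qs i) `&` ev (fun r => forall j, j \in I -> Qs j r)); last first.
  apply/seteqP; split=> w /=.
    by move=> H; split; [apply: H; rewrite inE eqxx| move=> j jI; apply: H; rewrite inE jI orbT].
  by move=> [H1 H2] j; rewrite inE => /orP[/eqP->//|/H2].
have Di : dep (ss i) (Qs i) by apply: HD; rewrite inE eqxx.
rewrite (@indep (ss i) _ (flatten (map ss I))) //; last first.
- move=> u ui; apply/negP => /flatten_mapP [j jI uj].
  have : u \notin ss j.
    apply: (Hdis i j u) => //; rewrite ?inE ?eqxx ?jI ?orbT //.
    by apply/negP => /eqP ij; rewrite ij jI in iI.
  by rewrite uj.
- move=> r r' E H j jI; apply: (HD j); first by rewrite inE jI orbT.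
    by move=> u uj; apply: E; apply/flatten_mapP; exists j.
  exact: H.
rewrite IH //; last 2 first.
- by move=> j jI; apply: HD; rewrite inE jI orbT.
- by move=> j j' u jI j'I; apply: Hdis; rewrite inE ?jI ?j'I orbT.
rewrite big_cons EFinM -PE //; exact: ev_dep_meas Di.
Qed.

End Indep.

Local Open Scope classical_set_scope.
Local Open Scope ring_scope.
Set Implicit Arguments. Unset Strict Implicit. Unset Printing Implicit Defensive.

Section Tree.
Variable d : nat.

Definition nch (w : vtx d) : nat := if val w is [::] then d.+1 else d.
Definition mkv (s : seq nat) : vtx d := insubd (origin d) s.
Definition child (w : vtx d) (i : nat) : vtx d := mkv (rcons (val w) i).

Lemma valid_child (w : vtx d) i : (i < nch w)%N -> valid_vtx d (rcons (val w) i).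
Proof.
case: w => [[|a s] /= Hv]; rewrite /nch /= => Hi; first by rewrite Hi.
by move: Hv => /andP[-> Hs]; rewrite all_rcons Hi.
Qed.

Lemma val_child (w : vtx d) i : (i < nch w)%N -> val (child w i) = rcons (val w) i.
Proof. by move=> Hi; rewrite /child /mkv val_insubd valid_child. Qed.

Lemma size_child (w : vtx d) i : (i < nch w)%N -> size (val (child w i)) = (size (val w)).+1.
Proof. by move=> Hi; rewrite val_child // size_rcons. Qed.

Lemma prefix_child (w : vtx d) i : (i < nch w)%N -> prefix (val w) (val (child w i)).
Proof. by move=> Hi; rewrite val_child // prefix_rcons. Qed.

Lemma nch_child (w : vtx d) i : (i < nch w)%N -> nch (child w i) = d.
Proof. by move=> Hi; rewrite /nch val_child //; case: (val w). Qed.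

Lemma child_disj (w v : vtx d) i j : (i < nch w)%N -> (j < nch w)%N ->
  prefix (val (child w i)) (val v) -> prefix (val (child w j)) (val v) -> i = j.
Proof.
move=> Hi Hj; rewrite !val_child // !prefixE !size_rcons => /eqP Ei /eqP Ej.
by move: Ei; rewrite Ej => /eqP; rewrite eqseq_rcons => /andP[_ /eqP].
Qed.

Lemma not_prefix_child (w : vtx d) i : (i < nch w)%N -> ~~ prefix (val (child w i)) (val w).
Proof.
move=> Hi; apply/negP => /size_prefix; rewrite size_child //.
by rewrite ltnn.
Qed.

Fixpoint Gn (n : nat) (r : vtx d -> nat) (w : vtx d) (a : nat) {struct n} : Prop :=
  match n with
  | 0 => False
  | n'.+1 => maxn a (r w) = 0%N \/
      (forall i, (i < nch w)%N -> Gn n' r (child w i) (maxn a (r w)).-1)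
  end.

Lemma Gn_mono_n n r w a : Gn n r w a -> Gn n.+1 r w a.
Proof.
elim: n w a => [//|n IH] w a /= [H|H]; [by left|right].
by move=> i Hi; apply: IH; apply: H.
Qed.

Lemma Gn_mono_le m n r w a : (m <= n)%N -> Gn m r w a -> Gn n r w a.
Proof.
move=> /subnK <-; elim: (n - m)%N => [//|k IH] H.
by rewrite addSn; apply: Gn_mono_n; apply: IH.
Qed.

Lemma Gn_mono_a n r w a b : (b <= a)%N -> Gn n r w a -> Gn n r w b.
Proof.
elim: n w a b => [//|n IH] w a b ba /= [H|H].
  by left; lia.
have [E|E] := eqVneq (maxn b (r w)) 0%N; first by left.
right=> i Hi; apply: (IH _ (maxn a (r w)).-1); last exact: H.
lia.
Qed.

Lemma Gn_lt n r w a : (0 < d)%N -> Gn n r w a -> (a < n)%N.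
Proof.
move=> d0; elim: n w a => [//|n IH] w a /= [H|H].
  by lia.
have Hi : (0 < nch w)%N by rewrite /nch; case: (val w).
have := IH _ _ (H 0%N Hi).
lia.
Qed.

Definition subtree (w : vtx d) : pred (vtx d) := fun v => prefix (val w) (val v).

Lemma Gn_dep n w : exists s : seq (vtx d), uniq s /\ {subset s <= subtree w} /\
  forall a, dep s (fun r => Gn n r w a).
Proof.
elim: n w => [|n IH] w.
  by exists [::]; split => //; split => // a r r' _.
have [S [HS1 HS2]] : exists S : seq (vtx d), {subset S <= subtree w} /\
    forall i, (i < nch w)%N -> forall a, dep S (fun r => Gn n r (child w i) a).
  suff : forall m, (m <= nch w)%N -> exists S : seq (vtx d), {subset S <= subtree w} /\
    forall i, (i < m)%N -> forall a, dep S (fun r => Gn n r (child w i) a).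
    by move/(_ (nch w) (leqnn _)).
  elim=> [|m IHm] Hm; first by exists [::].
  have [S [HS1 HS2]] := IHm (ltnW Hm).
  have [s [_ [Hs1 Hs2]]] := IH (child w m).
  exists (s ++ S); split.
    move=> u; rewrite mem_cat => /orP[/Hs1|/HS1] //.
    rewrite /subtree => Hp; apply: prefix_trans Hp; exact: prefix_child.
  move=> i; rewrite ltnS leq_eqVlt => /orP[/eqP ->|Hi] a.
    by apply: dep_sub (Hs2 a) => u us; rewrite mem_cat us.
  by apply: dep_sub (HS2 i Hi a) => u us; rewrite mem_cat us orbT.
exists (undup (w :: S)); split; first exact: undup_uniq.
split.
  move=> u; rewrite mem_undup inE => /orP[/eqP ->|/HS1 //].
  exact: prefix_refl.
move=> a r r' E /= H.
have Ew : r w = r' w by apply: E; rewrite mem_undup inE eqxx.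
rewrite -Ew; case: H => [H|H]; [by left|right] => i Hi.
apply: (HS2 i Hi _ r) => //; last exact: H.
by move=> u uS; apply: E; rewrite mem_undup inE uS orbT.
Qed.

End Tree.

Local Open Scope classical_set_scope.
Local Open Scope ring_scope.
Set Implicit Arguments. Unset Strict Implicit. Unset Printing Implicit Defensive.

Local Notation cluster := Defs.cluster.
Section Sem.
Variable d : nat.
Variable r : vtx d -> nat.

Lemma size_pre (u v : vtx d) : prefix (val u) (val v) -> (size (val u) <= size (val v))%N.
Proof. exact: size_prefix. Qed.

Lemma cone_self u : cone r u u.
Proof. by split; [exact: prefix_refl| rewrite /tree_dist_down subnn]. Qed.

Lemma Ilevel_mono n v : Ilevel r n v -> Ilevel r n.+1 v.
Proof. by move=> H; exists v => //; exact: cone_self. Qed.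

Lemma cluster_cone u v : cluster r u -> cone r u v -> cluster r v.
Proof. by move=> [n _ Hn] Hc; exists n.+1 => //; exists u. Qed.

Lemma cluster_origin : cluster r (origin d).
Proof. by exists 0%N. Qed.

Lemma cluster_ind (Q : vtx d -> Prop) : Q (origin d) ->
  (forall u v, Q u -> cone r u v -> Q v) -> forall v, cluster r v -> Q v.
Proof.
move=> H0 HS v [n _]; elim: n v => [|n IH] v /=; first by move=> ->.
by move=> [u /IH Hu Hc]; apply: HS Hc.
Qed.

Lemma vtx_eq (u v : vtx d) : prefix (val u) (val v) -> size (val v) = size (val u) -> u = v.
Proof.
move=> /prefixP [t Ht] Hs; apply: val_inj; move: Hs; rewrite Ht size_cat.
by case: t Ht => [|x t] Ht; [rewrite cats0| rewrite /=; lia].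
Qed.

Lemma path_child (u v : vtx d) : prefix (val u) (val v) ->
  (size (val u) < size (val v))%N ->
  exists2 i, (i < nch u)%N & prefix (val (child u i)) (val v).
Proof.
move=> /prefixP [t Ht]; rewrite Ht size_cat -{1}(addn0 (size (val u))) ltn_add2l.
case: t Ht => [//|i t] Ht _.
have Hi : (i < nch u)%N.
  have := valP v; rewrite Ht /nch; case: (val u) => [|x s] /=.
    by case/andP.
  by case/andP => _; rewrite all_cat => /andP[_ /andP[]].
exists i => //; rewrite val_child // -cats1 prefix_catr //.
by rewrite eqxx andTb; apply/prefixP; exists t.
Qed.

Lemma dirA D : (0 < d)%N -> (forall v, cluster r v -> (size (val v) < D)%N) ->
  forall n w a, (D <= size (val w) + n)%N -> cluster r w ->
  (forall v, prefix (val w) (val v) -> (size (val v) - size (val w) <= a)%N -> cluster r v) ->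
  Gn n r w a.
Proof.
move=> d0 HD; elim=> [|n IH] w a Hs Hw Hb.
  by have := HD _ Hw; lia.
rewrite /=; have [E|E] := eqVneq (maxn a (r w)) 0%N; first by left.
right=> i Hi.
have Hball : forall v, prefix (val w) (val v) ->
    (size (val v) - size (val w) <= maxn a (r w))%N -> cluster r v.
  move=> v Hp; rewrite leq_max => /orP[H|H]; first exact: Hb.
  by apply: cluster_cone Hw _; split.
apply: IH.
- by rewrite size_child //; lia.
- apply: Hball; first exact: prefix_child.
  by rewrite size_child //; lia.
- move=> v Hp Hle; apply: Hball.
    exact: prefix_trans (prefix_child Hi) Hp.
  by move: Hle; rewrite size_child //; lia.
Qed.

Lemma clusterGn D : (0 < d)%N -> (forall v, cluster r v -> (size (val v) < D)%N) ->
  Gn D r (origin d) 0.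
Proof.
move=> d0 HD; apply: (dirA d0 HD) => //; first exact: cluster_origin.
move=> v _; rewrite /= subn0 leqn0 => /eqP Hs.
rewrite (_ : v = origin d); first exact: cluster_origin.
by apply: val_inj; rewrite /=; apply/eqP; rewrite -size_eq0 Hs.
Qed.

Lemma Gn_down j (w u : vtx d) a m : (0 < d)%N ->
  (size (val u) - size (val w))%N = j -> prefix (val w) (val u) -> (j <= a)%N ->
  Gn m r w a -> Gn (m - j) r u (a - j).
Proof.
move=> d0; elim: j w a m => [|j IH] w a m Hj Hp Hja HG.
  have Hs : size (val u) = size (val w).
    by have := size_pre Hp; lia.
  by rewrite -(vtx_eq Hp Hs) !subn0.
have [i Hi Hc] := path_child Hp (ltac:(lia)).
have am := Gn_lt d0 HG.
case: m HG am => [//|m] /= [H|H] am; first by lia.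
have HG' := Gn_mono_a (ltac:(lia) : (a.-1 <= (maxn a (r w)).-1)%N) (H i Hi).
have := IH _ _ _ (ltac:(rewrite size_child //; lia) : (size (val u) - size (val (child w i)))%N = j) Hc
  (ltac:(lia) : (j <= a.-1)%N) HG'.
by rewrite subSS (_ : (a - j.+1 = a.-1 - j)%N) //; lia.
Qed.

Lemma dirB n : (0 < d)%N -> Gn n r (origin d) 0 -> forall v, cluster r v -> (size (val v) < n)%N.
Proof.
move=> d0 H0.
pose Inv (v : vtx d) := exists (w : vtx d) a m, [/\ prefix (val w) (val v),
  (size (val v) - size (val w) <= a)%N, Gn m r w a & (size (val w) + m <= n)%N].
suff HI : forall v, cluster r v -> Inv v.
  move=> v /HI [w [a [m [Hp Hs HG Hn]]]].
  have := Gn_lt d0 HG; have := size_pre Hp; lia.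
apply: cluster_ind.
  by exists (origin d), 0%N, n; split => //; exact: prefix_refl.
move=> u v [w [a [m [Hp Hs HG Hn]]]] [Hc Hcd].
have Hsw := size_pre Hp.
have HGu := Gn_down d0 (erefl _) Hp Hs HG.
have am := Gn_lt d0 HG.
move: Hcd; rewrite /tree_dist_down => Hcd.
have Hsuv := size_pre Hc.
have [Heq|Hlt] := eqVneq (size (val v)) (size (val u)).
  rewrite -(vtx_eq Hc Heq).
  exists u, (a - (size (val u) - size (val w)))%N, (m - (size (val u) - size (val w)))%N.
  split => //; [exact: prefix_refl| rewrite subnn //| lia].
have Hlt' : (size (val u) < size (val v))%N by lia.
have bm := Gn_lt d0 HGu.
move: HGu bm.
case E: (m - (size (val u) - size (val w)))%N => [|m2] // [H|H] bm; first by lia.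
have [i Hi Hci] := path_child Hc Hlt'.
exists (child u i), (maxn (a - (size (val u) - size (val w))) (r u)).-1, m2.
split; [exact: Hci| |exact: H| ].
- by rewrite size_child //; lia.
- by rewrite size_child //; lia.
Qed.

Fixpoint allseq (n : nat) : seq (seq nat) :=
  if n is n'.+1 then [::] :: [seq x :: s | x <- iota 0 d.+1, s <- allseq n'] else [::].

Lemma allseqS n : allseq n.+1 = [::] :: [seq x :: s | x <- iota 0 d.+1, s <- allseq n].
Proof. by []. Qed.

Lemma mem_allseq n (s : seq nat) : (size s < n)%N -> all (fun x => x < d.+1)%N s -> s \in allseq n.
Proof.
elim: n s => [//|n IH] [|x s] Hs Ha; first by rewrite /= inE eqxx.
move/andP: Ha => [Hx Ha].
rewrite allseqS in_cons; apply/orP; right; apply/allpairsP; exists (x, s); split => //.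
  by rewrite mem_iota.
by apply: IH.
Qed.

Lemma finite_bounded D : finite_set [set v : vtx d | (size (val v) < D)%N].
Proof.
apply: (sub_finite_set _ (finite_seq (map (mkv d) (allseq D)))) => v /= Hv.
apply/mapP; exists (val v); last first.
  by apply: val_inj; rewrite /mkv val_insubd (valP v).
apply: mem_allseq => //.
have := valP v; case: (val v) => [//|x s] /= /andP[-> Hs] /=.
by apply: sub_all Hs => y /= Hy; apply: ltnW.
Qed.

Lemma finite_clusterP : (0 < d)%N ->
  finite_set (cluster r) <-> exists n, Gn n r (origin d) 0.
Proof.
move=> d0; split.
  move/finite_seqP => [s Hs].
  exists (\max_(v <- s) size (val v)).+1; apply: clusterGn => // v.
  rewrite Hs /= => vs; rewrite ltnS.
  by apply: (@leq_bigmax_seq _ s xpredT (fun u => size (sval u)) v vs).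
move=> [n Hn]; apply: (@sub_finite_set _ _ [set v : vtx d | (size (val v) < n)%N]).
  by move=> v /(dirB d0 Hn).
exact: finite_bounded.
Qed.

End Sem.

Import numFieldNormedType.Exports.
Local Open Scope classical_set_scope.
Local Open Scope ring_scope.
Unset Printing Implicit Defensive. Unset Implicit Arguments. Set Strict Implicit.

Section Prob.
Context (R : realType) (dsp : measure_display) (T : measurableType dsp)
  (P : probability T R) (d : nat) (p : nat -> R) (Rv : vtx d -> T -> nat).
Hypothesis hmeas : forall v k, measurable [set w | Rv v w = k].
Hypothesis hpk : forall v k, P [set w | Rv v w = k] = (p k)%:E.
Hypothesis hind : forall (s : seq (vtx d)), uniq s -> forall k : vtx d -> nat,
     P (\bigcap_(v in [set` s]) [set w | Rv v w = k v]) = (\prod_(v <- s) p (k v))%:E.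
Hypothesis d0 : (0 < d)%N.

Definition Gev n w a := ev Rv (fun r => Gn n r w a).
Definition Fev w a := \bigcup_n Gev n w a.
Definition pr (A : set T) : R := fine (P A).

Definition supp n w : seq (vtx d) := projT1 (cid (Gn_dep n w)).

Lemma supp_uniq n w : uniq (supp n w).
Proof. by rewrite /supp; case: cid => s [? [? ?]]. Qed.
Lemma supp_sub n w : {subset supp n w <= subtree w}.
Proof. by rewrite /supp; case: cid => s [? [? ?]]. Qed.
Lemma supp_dep n w a : dep (supp n w) (fun r => Gn n r w a).
Proof. by rewrite /supp; case: cid => s [? [? ?]]. Qed.

Lemma Gev_meas n w a : measurable (Gev n w a).
Proof. rewrite /Gev; exact: (ev_dep_meas hmeas (@supp_dep n w a)). Qed.

Lemma Fev_meas w a : measurable (Fev w a).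
Proof. by apply: bigcupT_measurable => n; exact: Gev_meas. Qed.

Lemma Gev_nd w a : nondecreasing_seq (fun n => Gev n w a).
Proof.
move=> m n mn; rewrite subsetEset => x; rewrite /Gev /ev /=; exact: Gn_mono_le.
Qed.

Lemma pr_ge0 A : 0 <= pr A.
Proof. by rewrite /pr fine_ge0 // measure_ge0. Qed.

Lemma pr_le1 A : measurable A -> pr A <= 1.
Proof.
move=> mA; rewrite /pr -lee_fin -PE //; exact: probability_le1.
Qed.

Lemma prE A : measurable A -> P A = (pr A)%:E.
Proof. exact: PE. Qed.

Lemma pr_le A B : measurable A -> measurable B -> A `<=` B -> pr A <= pr B.
Proof.
move=> mA mB AB; rewrite -lee_fin -!prE //; apply: le_measure => //; by rewrite inE.
Qed.

Definition Yv (h : vtx d -> nat -> R) (w : vtx d) (a k : nat) : R :=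
  if maxn a k == 0%N then 1 else \prod_(i <- iota 0 (nch w)) h (child w i) (maxn a k).-1.

Definition Zset n w a k : set T :=
  if maxn a k == 0%N then setT
  else ev Rv (fun r => forall i, i \in iota 0 (nch w) -> Gn n r (child w i) (maxn a k).-1).

Lemma Gev_decomp n w a :
  Gev n.+1 w a = \bigcup_k ([set x | Rv w x = k] `&` Zset n w a k).
Proof.
apply/seteqP; split=> x.
  rewrite /Gev /ev /= => H; exists (Rv w x) => //; split => //.
  rewrite /Zset; case: eqP => // E; move: H => [//|H] i.
  by rewrite mem_iota add0n => /andP[_ /H].
move=> [k _ [/= <-]]; rewrite /Gev /ev /Zset /=.
case: eqP => [E _|E H]; first by left.
by right => i Hi; apply: H; rewrite mem_iota add0n Hi.
Qed.

Lemma Zset_dep n w b : dep (flatten (map (fun i => supp n (child w i)) (iota 0 (nch w))))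
  (fun r => forall i, i \in iota 0 (nch w) -> Gn n r (child w i) b).
Proof.
move=> r r' E H i Hi; apply: (@supp_dep n (child w i) b r) => //; last exact: H.
by move=> u us; apply: E; apply/flatten_mapP; exists i.
Qed.

Lemma prod_indep n w b :
  P (ev Rv (fun r => forall i, i \in iota 0 (nch w) -> Gn n r (child w i) b)) =
  (\prod_(i <- iota 0 (nch w)) pr (Gev n (child w i) b))%:E.
Proof.
rewrite (indep_list hmeas hind (ss := fun i => supp n (child w i))).
- by [].
- exact: iota_uniq.
- by move=> i _; exact: supp_dep.
move=> i j u; rewrite !mem_iota !add0n => /andP[_ Hi] /andP[_ Hj] ij ui.
apply/negP => uj; move/negP: ij; apply; apply/eqP.
apply: (@child_disj d w u) => //.
  exact: (supp_sub _ _ _ ui).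
exact: (supp_sub _ _ _ uj).
Qed.

Lemma R1 n w a : P (Gev n.+1 w a) =
  (\sum_(0 <= k <oo) (p k * Yv (fun c b => pr (Gev n c b)) w a k)%:E)%E.
Proof.
rewrite Gev_decomp.
transitivity (\sum_(0 <= k <oo) P ([set x | Rv w x = k] `&` Zset n w a k))%E.
  apply/esym/cvg_lim => //.
  apply: measure_sigma_additive.
    move=> k; apply: measurableI => //; rewrite /Zset; case: eqP => // _.
    exact: (ev_dep_meas hmeas (@Zset_dep n w _)).
  move=> i j _ _ [x [[/= Hi _] [/= Hj _]]]; by rewrite -Hi -Hj.
apply: eq_eseriesr => k _.
rewrite /Zset /Yv; case: eqP => _; first by rewrite setIT hpk mulr1.
rewrite (_ : [set x | Rv w x = k] = ev Rv (fun r => r w = k)) //.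
rewrite (indep hmeas hind (s1 := [:: w])
  (s2 := flatten (map (fun i => supp n (child w i)) (iota 0 (nch w))))).
- by rewrite prod_indep EFinM; congr (_ * _)%E; exact: hpk.
- by move=> r r' E <-; apply/esym/E; rewrite inE eqxx.
- exact: (@Zset_dep n w _).
move=> u; rewrite inE => /eqP ->; apply/negP => /flatten_mapP [i].
rewrite mem_iota add0n => /andP[_ Hi] /supp_sub.
by rewrite /subtree; apply/negP; exact: not_prefix_child.
Qed.


Lemma cvg_sum_seq (I : Type) (s : seq I) (u : I -> nat -> R) (l : I -> R) :
  (forall i, u i n @[n --> \oo] --> l i) ->
  \sum_(i <- s) u i n @[n --> \oo] --> \sum_(i <- s) l i.
Proof.
move=> H; elim: s => [|i s IH].
  rewrite big_nil; under eq_cvg do rewrite big_nil; exact: cvg_cst.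
rewrite big_cons; under eq_cvg do rewrite big_cons.
exact: cvgD.
Qed.

Lemma cvg_prod_seq (I : Type) (s : seq I) (u : I -> nat -> R) (l : I -> R) :
  (forall i, u i n @[n --> \oo] --> l i) ->
  \prod_(i <- s) u i n @[n --> \oo] --> \prod_(i <- s) l i.
Proof.
move=> H; elim: s => [|i s IH].
  rewrite big_nil; under eq_cvg do rewrite big_nil; exact: cvg_cst.
rewrite big_cons; under eq_cvg do rewrite big_cons.
exact: cvgM.
Qed.

Lemma Gev0 w a : Gev 0 w a = set0.
Proof. by apply/seteqP; split=> x. Qed.

Lemma P_Gev_cvg w a : P (Gev n w a) @[n --> \oo] --> P (Fev w a).
Proof.
apply: (nondecreasing_cvg_mu (F := fun n => Gev n w a)).
- by move=> n; exact: Gev_meas.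
- exact: Fev_meas.
- exact: Gev_nd.
Qed.

Lemma pr_Gev_cvg w a : pr (Gev n w a) @[n --> \oo] --> pr (Fev w a).
Proof.
have := P_Gev_cvg w a; rewrite (prE _ (Fev_meas w a)) => /fine_cvgP [_ H].
exact: H.
Qed.

Lemma pr_Gev_le n w a : pr (Gev n w a) <= pr (Fev w a).
Proof.
apply: pr_le; [exact: Gev_meas| exact: Fev_meas|].
by move=> x Hx; exists n.
Qed.

Lemma Yv_ge0 h w a k : (forall c b, 0 <= h c b) -> 0 <= Yv h w a k.
Proof.
move=> H; rewrite /Yv; case: eqP => // _; exact: prodr_ge0.
Qed.

Lemma Yv_le h h' w a k : (forall c b, 0 <= h c b <= h' c b) -> Yv h w a k <= Yv h' w a k.
Proof.
move=> H; rewrite /Yv; case: eqP => // _; exact: ler_prod.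
Qed.

Lemma Yv_cvg (hn : nat -> vtx d -> nat -> R) h w a k :
  (forall c b, hn n c b @[n --> \oo] --> h c b) ->
  Yv (hn n) w a k @[n --> \oo] --> Yv h w a k.
Proof.
move=> H; rewrite /Yv; case: eqP => _; first exact: cvg_cst.
apply: (@cvg_prod_seq _ _ (fun i n => hn n (child w i) (maxn a k).-1)) => i.
exact: H.
Qed.

Definition fF (c : vtx d) b := pr (Fev c b).
Definition gG n (c : vtx d) b := pr (Gev n c b).

Lemma R2 w a : P (Fev w a) = (\sum_(0 <= k <oo) (p k * Yv fF w a k)%:E)%E.
Proof.
have pge0 := p_ge0 hpk.
have fge0 : forall c b, 0 <= fF c b by move=> c b; exact: pr_ge0.
apply/eqP; rewrite eq_le; apply/andP; split.
  rewrite -(cvg_lim _ (P_Gev_cvg w a)) //; apply: lime_le.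
    by apply/cvg_ex; eexists; exact: (P_Gev_cvg w a).
  apply: nearW => -[|n].
    by rewrite Gev0 measure0; apply: nneseries_ge0 => k _ _; rewrite lee_fin mulr_ge0 // Yv_ge0.
  rewrite R1; apply: lee_nneseries.
    by move=> k _ _; rewrite lee_fin mulr_ge0 // Yv_ge0 // => c b; exact: pr_ge0.
  move=> k _; rewrite lee_fin ler_wpM2l // Yv_le // => c b.
  by rewrite pr_ge0 pr_Gev_le.
apply: lime_le.
  by apply: is_cvg_nneseries => k _ _; rewrite lee_fin mulr_ge0 // Yv_ge0.
apply: nearW => K.
rewrite sumEFin prE; last exact: Fev_meas.
rewrite lee_fin.
have Hc : \sum_(0 <= k < K) p k * Yv (gG n) w a k @[n --> \oo] -->
    \sum_(0 <= k < K) p k * Yv fF w a k.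
  apply: (@cvg_sum_seq _ _ (fun k n => p k * Yv (gG n) w a k)) => k.
  apply: cvgMr; apply: Yv_cvg => c b.
  exact: pr_Gev_cvg.
rewrite -(cvg_lim _ Hc) //; apply: limr_le; first by apply/cvg_ex; eexists; exact: Hc.
apply: nearW => n /=.
apply: le_trans (pr_Gev_le n.+1 w a).
rewrite -lee_fin -prE; last exact: Gev_meas.
rewrite R1 -sumEFin.
by apply: nneseries_lim_ge => k _ _; rewrite lee_fin mulr_ge0 // Yv_ge0 // => c b; exact: pr_ge0.
Qed.


Lemma psum1 : (\sum_(0 <= k <oo) (p k)%:E)%E = 1%E.
Proof.
rewrite -(probability_setT P).
rewrite (_ : setT = \bigcup_k [set x | Rv (origin d) x = k]); last first.
  by apply/seteqP; split=> x // _; exists (Rv (origin d) x).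
transitivity (\sum_(0 <= k <oo) P [set x | Rv (origin d) x = k])%E.
  by apply: eq_eseriesr => k _; rewrite hpk.
apply/cvg_lim => //; apply: measure_sigma_additive => //.
by move=> i j _ _ [x [/= Hi Hj]]; rewrite -Hi -Hj.
Qed.

Lemma prod_iota_const m (c : R) : \prod_(i <- iota 0 m) c = c ^+ m.
Proof. by rewrite big_const_seq count_predT size_iota; elim: m => // m IH; rewrite iterS IH exprS. Qed.

Lemma prod_le_const m (F : nat -> R) c :
  (forall i, (i < m)%N -> 0 <= F i <= c) -> \prod_(i <- iota 0 m) F i <= c ^+ m.
Proof.
move=> H; rewrite -prod_iota_const big_seq_cond [X in _ <= X]big_seq_cond.
apply: ler_prod => i /andP[]; rewrite mem_iota add0n => /andP[_ Hi] _; exact: H.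
Qed.

Lemma prod_ge_const m (F : nat -> R) c : 0 <= c ->
  (forall i, (i < m)%N -> c <= F i) -> c ^+ m <= \prod_(i <- iota 0 m) F i.
Proof.
move=> c0 H; rewrite -prod_iota_const big_seq_cond [X in _ <= X]big_seq_cond.
apply: ler_prod => i /andP[]; rewrite mem_iota add0n => /andP[_ Hi] _.
by rewrite c0 H.
Qed.

Lemma nch_nonroot (w : vtx d) i : (i < nch w)%N -> nch (child w i) = d.
Proof. exact: nch_child. Qed.

Lemma LBg rho : 0 <= rho <= 1 ->
  (\sum_(0 <= k <oo) (p k * (if k == 0%N then 1 else rho ^+ (d ^ k)))%:E)%E = rho%:E ->
  forall n w a, nch w = d -> pr (Gev n w a) <= rho ^+ (d ^ a).
Proof.
move=> /andP[r0 r1] Hfix; have pge0 := p_ge0 hpk.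
elim=> [|n IH] w a Hw.
  by rewrite /pr Gev0 measure0 /= exprn_ge0.
rewrite -lee_fin -prE; last exact: Gev_meas.
rewrite R1.
pose Z k := if maxn a k == 0%N then 1 else rho ^+ (d ^ maxn a k).
apply: (@le_trans _ _ (\sum_(0 <= k <oo) (p k * Z k)%:E)%E).
  apply: lee_nneseries.
    move=> k _ _; rewrite lee_fin mulr_ge0 // Yv_ge0 // => c b; exact: pr_ge0.
  move=> k _; rewrite lee_fin ler_wpM2l // /Yv /Z; case: eqP => // Hm.
  rewrite Hw; apply: le_trans; first apply: (prod_le_const _ _ (rho ^+ (d ^ (maxn a k).-1))).
    move=> i Hi; rewrite pr_ge0 /=; apply: IH.
    by apply: nch_nonroot; rewrite Hw.
  rewrite -exprM -expnSr prednK //; lia.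
rewrite /Z; have [->|a0] := eqVneq a 0%N.
  rewrite expn0 expr1 -Hfix le_eqVlt; apply/orP; left; apply/eqP.
  by apply: eq_eseriesr => k _; rewrite max0n.
apply: le_trans.
  apply: (@lee_nneseries _ _ (fun k => (p k * rho ^+ (d ^ a))%:E)).
    move=> k _ _; rewrite lee_fin mulr_ge0 //; case: eqP => // _; exact: exprn_ge0.
  move=> k _; rewrite lee_fin ler_wpM2l //; case: eqP => [H|_]; first by lia.
  apply: ler_wiXn2l => //; apply: leq_pexp2l => //; exact: leq_maxl.
under eq_eseriesr do rewrite EFinM muleC.
rewrite nneseriesZl ?psum1 ?mule1 // => k _; rewrite lee_fin; exact: pge0.
Qed.


Lemma LBf rho : 0 <= rho <= 1 ->
  (\sum_(0 <= k <oo) (p k * (if k == 0%N then 1 else rho ^+ (d ^ k)))%:E)%E = rho%:E ->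
  forall w a, nch w = d -> pr (Fev w a) <= rho ^+ (d ^ a).
Proof.
move=> Hr Hfix w a Hw.
rewrite -(cvg_lim _ (pr_Gev_cvg w a)) //; apply: limr_le.
  by apply/cvg_ex; eexists; exact: (pr_Gev_cvg w a).
by apply: nearW => n; exact: LBg.
Qed.

Lemma eq_tail (f g : nat -> \bar R) : (forall k, (0 < k)%N -> f k = g k) ->
  (\sum_(1 <= k <oo) f k = \sum_(1 <= k <oo) g k)%E.
Proof.
by move=> H; rewrite eseries_cond [RHS]eseries_cond; apply: eq_eseriesr => k /andP[_ Hk]; exact: H.
Qed.

Lemma Eg_bounds f : (forall k, 0 <= f k <= 1) ->
  [/\ (0 <= Eg p f)%E, (Eg p f <= 1)%E & Eg p f \is a fin_num].
Proof.
move=> H; have pge0 := p_ge0 hpk.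
have h0 : (0 <= Eg p f)%E.
  apply: nneseries_ge0 => k _ _; rewrite lee_fin mulr_ge0 //; by case/andP: (H k).
have h1 : (Eg p f <= 1)%E.
  rewrite -psum1; apply: lee_nneseries.
    move=> k _ _; rewrite lee_fin mulr_ge0 //; by case/andP: (H k).
  by move=> k _; rewrite lee_fin ler_piMr //; case/andP: (H k).
split => //; rewrite ge0_fin_numE //; exact: (le_lt_trans h1 (ltey _)).
Qed.


Lemma surv_eq : survival Rv = ~` Fev (origin d) 0.
Proof.
apply/seteqP; split=> x /=.
  move=> Hs [n _ Hn]; apply: Hs; apply/(finite_clusterP (fun v => Rv v x) d0).
  by exists n.
move=> Hn Hf; apply: Hn.
have [n Hn] := (finite_clusterP (fun v => Rv v x) d0).1 Hf.
by exists n.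
Qed.

Lemma P_surv : P (survival Rv) = (1 - P (Fev (origin d) 0))%E.
Proof. by rewrite surv_eq probability_setC //; exact: Fev_meas. Qed.


Lemma powR_le1' (x y : R) : 0 <= x <= 1 -> 0 <= y -> x `^ y <= 1.
Proof.
move=> /andP[x0 x1] y0.
have := @ge0_ler_powR R y y0 x 1; rewrite powR1; apply => //; rewrite nnegrE //.
Qed.

Lemma nch_origin : nch (origin d) = d.+1.
Proof. by []. Qed.

Lemma LB_main rho : 0 <= rho ->
  (Eg p (fun k => (rho ^+ (d ^ k))%R) + ((1 - rho) * p 0%N)%:E = rho%:E)%E ->
  (forall r, 0 <= r -> (Eg p (fun k => (r ^+ (d ^ k))%R) + ((1 - r) * p 0%N)%:E = r%:E)%E ->
     rho <= r) ->
  ((1 - (1 - rho `^ (d.+1%:R / d%:R)) * p 0%N)%R%:E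
     - Eg p (fun k => (rho `^ (d.+1%:R / d%:R * (d ^ k)%:R))%R) <= P (survival Rv))%E.
Proof.
move=> r0 Hfix Hmin; have pge0 := p_ge0 hpk.
have r1 : rho <= 1.
  apply: Hmin => //; rewrite /Eg; under eq_eseriesr do rewrite expr1n mulr1.
  by rewrite psum1 subrr mul0r adde0.
have Hfix' : (\sum_(0 <= k <oo) (p k * (if k == 0%N then 1 else rho ^+ (d ^ k)))%:E)%E = rho%:E.
  rewrite -Hfix /Eg nneseries_recl //; last first.
    by move=> k _; rewrite lee_fin mulr_ge0 //; case: eqP => // _; exact: exprn_ge0.
  rewrite [X in _ = (X + _)%E]nneseries_recl //; last first.
    by move=> k _; rewrite lee_fin mulr_ge0 // exprn_ge0.
  rewrite (@eq_tail _ (fun k => (p k * rho ^+ (d ^ k))%:E)); last first.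
    by move=> k; case: k.
  rewrite /= expn0 expr1 addeAC -EFinD; congr (_ + _)%E; congr (_%:E).
  by rewrite mulr1 mulrBl mul1r mulrC addrC subrK.
have HF := LBf rho (ltac:(by rewrite r0 r1)) Hfix'.
set c := d.+1%:R / d%:R.
have c0 : 0 <= c by rewrite divr_ge0.
have rc1 : rho `^ c <= 1 by apply: powR_le1' => //; rewrite r0.
have Hb : (P (Fev (origin d) 0) <= ((1 - rho `^ c) * p 0%N)%:E + Eg p (fun k => (rho `^ (c * (d ^ k)%:R))%R))%E.
  rewrite R2; apply: le_trans.
    apply: (@lee_nneseries _ _ (fun k => (p k * (rho `^ (c * (d ^ k)%:R) +
       (if k == 0%N then 1 - rho `^ c else 0)))%:E)).
      by move=> k _ _; rewrite lee_fin mulr_ge0 // Yv_ge0 // => ? ?; exact: pr_ge0.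
    move=> k _; rewrite lee_fin ler_wpM2l // /Yv max0n; case: eqP => [->|k0].
      by rewrite expn0 mulr1 addrC subrK.
    rewrite addr0 nch_origin; apply: le_trans.
      apply: (prod_le_const _ _ (rho ^+ (d ^ k.-1))) => i Hi.
      rewrite pr_ge0 /=; apply: HF; exact: nch_nonroot.
    rewrite -exprM -powR_mulrn // le_eqVlt; apply/orP; left; apply/eqP; congr (_ `^ _).
    have -> : (d ^ k = d ^ k.-1 * d)%N by rewrite -expnSr prednK // lt0n; apply/eqP.
    rewrite /c !natrM -[d.+1]addn1 natrD; field.
    by rewrite pnatr_eq0 -lt0n.
  under eq_eseriesr do rewrite mulrDr EFinD.
  rewrite nneseriesD; last 2 first.
  - move=> k _ _; rewrite lee_fin mulr_ge0 //; exact: powR_ge0.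
  - move=> k _ _; rewrite lee_fin mulr_ge0 //; case: eqP => // _; by rewrite subr_ge0.
  rewrite addeC le_eqVlt; apply/orP; left; apply/eqP; congr (_ + _)%E.
  rewrite nneseries_recl //; last first.
    move=> k _; rewrite lee_fin mulr_ge0 //; case: eqP => // _; by rewrite subr_ge0.
  rewrite eseries0; last by move=> k; case: k => // k _ _ /=; rewrite mulr0.
  by rewrite adde0 /= mulrC.
have [Eg0 Eg1 Egf] := @Eg_bounds (fun k => rho `^ (c * (d ^ k)%:R)) (fun k =>
  ltac:(by rewrite powR_ge0 /= powR_le1' // ?r0 ?r1 // mulr_ge0)).
rewrite P_surv (prE _ (Fev_meas _ _)) -(fineK Egf).
move: Hb; rewrite (prE _ (Fev_meas _ _)) -(fineK Egf) -EFinD !lee_fin => Hb.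
lra.
Qed.


Fixpoint Ee (a : nat) : nat := if a is a'.+1 then (1 + d * Ee a')%N else 1%N.

Lemma Sk0 : (\sum_(1 <= m < 1) d ^ m)%N = 0%N.
Proof. by rewrite big_geq. Qed.

Lemma Srec k : (\sum_(1 <= m < k.+2) d ^ m)%N = (d + d * \sum_(1 <= m < k.+1) d ^ m)%N.
Proof.
rewrite big_nat_recl // expn1; congr (_ + _)%N.
rewrite big_distrr /=; apply: eq_bigr => m _; by rewrite expnS.
Qed.

Lemma S_E k : (\sum_(1 <= m < k.+2) d ^ m)%N = (d * Ee k)%N.
Proof.
elim: k => [|k IH]; first by rewrite Srec Sk0 muln0 addn0 muln1.
by rewrite Srec IH /= mulnDr muln1.
Qed.

Lemma Ee_ge1 a : (0 < Ee a)%N.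
Proof. by case: a. Qed.

Definition Fpsi (t : R) := fine (Eg p (fun k => (t ^+ (\sum_(1 <= m < k.+1) d ^ m)%N)%R)).

Lemma Eg_psi t : 0 <= t <= 1 ->
  [/\ (0 <= Eg p (fun k => (t ^+ (\sum_(1 <= m < k.+1) d ^ m)%N)%R))%E,
      (Eg p (fun k => (t ^+ (\sum_(1 <= m < k.+1) d ^ m)%N)%R) <= 1)%E &
      Eg p (fun k => (t ^+ (\sum_(1 <= m < k.+1) d ^ m)%N)%R) \is a fin_num].
Proof.
move=> /andP[t0 t1]; apply: Eg_bounds => k.
by rewrite exprn_ge0 // exprn_ile1.
Qed.

Lemma Fpsi_E t : 0 <= t <= 1 ->
  Eg p (fun k => (t ^+ (\sum_(1 <= m < k.+1) d ^ m)%N)%R) = (Fpsi t)%:E.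
Proof. by move=> Ht; have [_ _ Hf] := Eg_psi _ Ht; rewrite /Fpsi fineK. Qed.

Lemma Fpsi_01 t : 0 <= t <= 1 -> 0 <= Fpsi t <= 1.
Proof.
move=> Ht; have [H0 H1 _] := Eg_psi _ Ht.
by move: H0 H1; rewrite Fpsi_E // !lee_fin => -> ->.
Qed.

Lemma Fpsi_mono s t : 0 <= s -> s <= t -> t <= 1 -> Fpsi s <= Fpsi t.
Proof.
move=> s0 st t1; have pge0 := p_ge0 hpk.
have t0 : 0 <= t by apply: le_trans st.
rewrite -lee_fin -!Fpsi_E ?s0 ?t0 ?t1 ?(le_trans st t1) //.
apply: lee_nneseries.
  by move=> k _ _; rewrite lee_fin mulr_ge0 // exprn_ge0.
move=> k _; rewrite lee_fin ler_wpM2l // lerXn2r // nnegrE //.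
Qed.

Definition tseq (n : nat) : R := iter n Fpsi 0.

Lemma tseq_01 n : 0 <= tseq n <= 1.
Proof. by elim: n => [|n IH] /=; [rewrite lexx ler01 | exact: Fpsi_01]. Qed.

Lemma tseq_nd : nondecreasing_seq tseq.
Proof.
apply/nondecreasing_seqP => n; elim: n => [|n IH].
  by have /andP[] := tseq_01 1.
rewrite [tseq n.+2]/= [tseq n.+1]/=; apply: Fpsi_mono => //.
  by have /andP[] := tseq_01 n.
by have /andP[] := tseq_01 n.+1.
Qed.


Lemma fF_R2 w a : (fF w a)%:E = (\sum_(0 <= k <oo) (p k * Yv fF w a k)%:E)%E.
Proof. by rewrite /fF -prE ?R2 //; exact: Fev_meas. Qed.

Lemma fF_01 w a : 0 <= fF w a <= 1.
Proof. by rewrite /fF pr_ge0 pr_le1 //; exact: Fev_meas. Qed.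

Lemma A0 t w : 0 <= t <= 1 -> nch w = d ->
  (forall i a, (i < d)%N -> t ^+ Ee a <= fF (child w i) a) ->
  Fpsi t <= fF w 0.
Proof.
move=> Ht Hw H; have pge0 := p_ge0 hpk; have /andP[t0 t1] := Ht.
rewrite -lee_fin -Fpsi_E // fF_R2; apply: lee_nneseries.
  by move=> k _ _; rewrite lee_fin mulr_ge0 // exprn_ge0.
move=> k _; rewrite lee_fin ler_wpM2l // /Yv max0n; case: k => [|k] /=.
  by rewrite Sk0 expr0.
rewrite Hw S_E mulnC exprM; apply: prod_ge_const; first exact: exprn_ge0.
by move=> i Hi; apply: H.
Qed.

Lemma Ustep w a : (fF w 0 * \prod_(i <- iota 0 (nch w)) fF (child w i) a <= fF w a.+1).
Proof.
have pge0 := p_ge0 hpk.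
have f0 : forall c b, 0 <= fF c b by move=> c b; case/andP: (fF_01 c b).
have C0 : 0 <= \prod_(i <- iota 0 (nch w)) fF (child w i) a by apply: prodr_ge0.
rewrite -lee_fin EFinM fF_R2 fF_R2 muleC -nneseriesZl; last first.
  by move=> k _; rewrite lee_fin mulr_ge0 // Yv_ge0.
apply: lee_nneseries.
  by move=> k _ _; rewrite -EFinM lee_fin mulr_ge0 // mulr_ge0 // Yv_ge0.
move=> k _; rewrite -EFinM lee_fin mulrCA ler_wpM2l // /Yv max0n.
have -> : (maxn a.+1 k == 0%N) = false by apply/negbTE; rewrite -lt0n; lia.
case: k => [|k] /=; first by rewrite mulr1.
rewrite -big_split /=; apply: ler_prod => i _.
rewrite mulr_ge0 //= (_ : (maxn a.+1 k.+1).-1 = maxn a k); last by lia.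
have /andP[_ h1] := fF_01 (child w i) a; have /andP[_ h2] := fF_01 (child w i) k.
case: (leqP a k) => ak.
  by apply: ler_piMl => //; case/andP: (fF_01 (child w i) k).
by apply: ler_piMr => //; case/andP: (fF_01 (child w i) a).
Qed.

Lemma UC n : forall w a, nch w = d -> tseq n ^+ Ee a <= fF w a.
Proof.
elim: n => [|n IH] w a Hw.
  by rewrite /= expr0n; case: (Ee a) (Ee_ge1 a) => // m _ /=; case/andP: (fF_01 w a).
have Ht := tseq_01 n.+1; have /andP[t0 t1] := Ht.
have H0 : forall w, nch w = d -> tseq n.+1 <= fF w 0.
  move=> w' Hw'; rewrite /=; apply: A0 => //; first exact: tseq_01.
  by move=> i b Hi; apply: IH; apply: nch_nonroot; rewrite Hw'.
elim: a w Hw => [|a IHa] w Hw; first by rewrite /= expr1; exact: H0.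
apply: le_trans (Ustep w a).
rewrite /= exprD expr1 mulnC exprM; apply: ler_pM.
- exact: t0.
- by apply: exprn_ge0; apply: exprn_ge0.
- exact: H0.
rewrite Hw; apply: prod_ge_const; first exact: exprn_ge0.
by move=> i Hi; apply: IHa; apply: nch_nonroot; rewrite Hw.
Qed.


Lemma tseq_cvg : cvgn tseq.
Proof.
apply: nondecreasing_is_cvgn; first exact: tseq_nd.
by exists 1 => _ [n _ <-]; case/andP: (tseq_01 n).
Qed.

Definition tstar := limn tseq.

Lemma tseq_le n : tseq n <= tstar.
Proof. exact: (nondecreasing_cvgn_le tseq_nd tseq_cvg). Qed.

Lemma tstar_01 : 0 <= tstar <= 1.
Proof.
apply/andP; split; first by apply: le_trans (tseq_le 0); rewrite lexx.
apply: limr_le; first exact: tseq_cvg.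
by apply: nearW => n; case/andP: (tseq_01 n).
Qed.

Lemma cvg_pow (u : nat -> R) (l : R) m : u n @[n --> \oo] --> l -> u n ^+ m @[n --> \oo] --> l ^+ m.
Proof.
move=> H; rewrite -prod_iota_const; under eq_cvg do rewrite -prod_iota_const.
by apply: (@cvg_prod_seq _ _ (fun i n => u n)) => i.
Qed.

Lemma tseq_cvg_to : tseq n @[n --> \oo] --> tstar.
Proof. exact: tseq_cvg. Qed.

Lemma UCstar w a : nch w = d -> tstar ^+ Ee a <= fF w a.
Proof.
move=> Hw; have Hc := cvg_pow tseq tstar (Ee a) tseq_cvg_to.
rewrite -(cvg_lim _ Hc) //; apply: limr_le; first by apply/cvg_ex; eexists; exact: Hc.
by apply: nearW => n; exact: UC.
Qed.

Lemma tstar_fix : Eg p (fun k => (tstar ^+ (\sum_(1 <= m < k.+1) d ^ m)%N)%R) = tstar%:E.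
Proof.
have pge0 := p_ge0 hpk.
have Ht := tstar_01; have /andP[t0 t1] := Ht.
rewrite Fpsi_E //; congr (_%:E); apply/eqP; rewrite eq_le; apply/andP; split.
  rewrite -lee_fin -Fpsi_E //; apply: lime_le.
    by apply: is_cvg_nneseries => k _ _; rewrite lee_fin mulr_ge0 // exprn_ge0.
  apply: nearW => K; rewrite sumEFin lee_fin.
  have Hc : \sum_(0 <= k < K) p k * tseq n ^+ (\sum_(1 <= m < k.+1) d ^ m)%N @[n --> \oo] -->
      \sum_(0 <= k < K) p k * tstar ^+ (\sum_(1 <= m < k.+1) d ^ m)%N.
    apply: (@cvg_sum_seq _ _ (fun k n => p k * tseq n ^+ (\sum_(1 <= m < k.+1) d ^ m)%N)) => k.
    by apply: cvgMr; apply: cvg_pow; exact: tseq_cvg_to.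
  rewrite -(cvg_lim _ Hc) //; apply: limr_le; first by apply/cvg_ex; eexists; exact: Hc.
  apply: nearW => n /=; apply: le_trans (tseq_le n.+1).
  rewrite /= -lee_fin -Fpsi_E; last exact: tseq_01.
  rewrite -sumEFin; apply: nneseries_lim_ge => k _ _.
  by rewrite lee_fin mulr_ge0 // exprn_ge0 //; case/andP: (tseq_01 n).
rewrite /tstar; apply: limr_le; first exact: tseq_cvg.
apply: nearW => n; apply: le_trans (tseq_nd n n.+1 (leqnSn n)) _.
rewrite /=; apply: Fpsi_mono => //; first by case/andP: (tseq_01 n).
exact: tseq_le.
Qed.


Lemma EeR k : ((d%:R - 1) * (Ee k)%:R = (d ^ k.+1)%:R - 1 :> R).
Proof.
elim: k => [|k IH]; first by rewrite /= expn1 mulr1.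
rewrite /= natrD natrM mulrDr mulr1 mulrCA IH (expnS d k.+1) natrM; ring.
Qed.

Lemma UB_main psi : (2 <= d)%N -> 0 <= psi ->
  Eg p (fun k => (psi ^+ (\sum_(1 <= m < k.+1) d ^ m)%N)%R) = psi%:E ->
  (forall r, 0 <= r -> Eg p (fun k => (r ^+ (\sum_(1 <= m < k.+1) d ^ m)%N)%R) = r%:E ->
     psi <= r) ->
  (P (survival Rv) <= 1 - Eg p (fun k => (psi `^ (d.+1%:R / (d - 1)%:R * (d ^ k - 1)%:R))%R))%E.
Proof.
move=> d2 s0 Hfix Hmin; have pge0 := p_ge0 hpk.
have /andP[t0 t1] := tstar_01.
have st : psi <= tstar by apply: Hmin => //; exact: tstar_fix.
have s1 : psi <= 1 by apply: le_trans t1.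
set c := d.+1%:R / (d - 1)%:R.
have d1R : (d - 1)%:R != 0 :> R by rewrite pnatr_eq0 subn_eq0 -ltnNge.
have c0 : 0 <= c by rewrite divr_ge0.
have Hb : (Eg p (fun k => (psi `^ (c * (d ^ k - 1)%:R))%R) <= P (Fev (origin d) 0))%E.
  rewrite R2; apply: lee_nneseries.
    by move=> k _ _; rewrite lee_fin mulr_ge0 // powR_ge0.
  move=> k _; rewrite lee_fin ler_wpM2l // /Yv max0n; case: k => [|k].
    by rewrite /= expn0 subnn mulr0 powRr0.
  rewrite (_ : (k.+1 == 0%N) = false) // nch_origin -pred_Sn.
  apply: (@le_trans _ _ ((tstar ^+ Ee k) ^+ d.+1)); last first.
    apply: (prod_ge_const _ _ (tstar ^+ Ee k)); first exact: exprn_ge0.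
    by move=> i Hi; apply: UCstar; apply: nch_nonroot; rewrite nch_origin.
  apply: (@le_trans _ _ ((psi ^+ Ee k) ^+ d.+1)); last first.
    apply: lerXn2r; rewrite ?nnegrE ?exprn_ge0 //.
    by apply: lerXn2r; rewrite ?nnegrE //.
  rewrite -exprM -powR_mulrn // le_eqVlt; apply/orP; left; apply/eqP; congr (_ `^ _).
  rewrite /c natrB ?expn_gt0 ?(ltn_trans _ d2) // natrB ?(ltn_trans _ d2) //.
  rewrite -EeR natrM -[d.+1]addn1 natrD; field.
  by rewrite subr_eq0 pnatr_eq1; apply/eqP => d1; rewrite d1 in d2.
  by rewrite expn_gt0 d0.
have [Eg0 Eg1 Egf] := @Eg_bounds (fun k => psi `^ (c * (d ^ k - 1)%:R)) (fun k =>
  ltac:(by rewrite powR_ge0 /= powR_le1' // ?s0 ?s1 // mulr_ge0)).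
rewrite P_surv (prE _ (Fev_meas _ _)) -(fineK Egf).
move: Hb; rewrite (prE _ (Fev_meas _ _)) -(fineK Egf) !lee_fin => Hb.
lra.
Qed.

End Prob.

Unset Implicit Arguments.
Local Open Scope classical_set_scope.
Local Open Scope ring_scope.
Theorem corollary2 (R : realType) (dsp : measure_display) (T : measurableType dsp)
  (P : probability T R) (d : nat) (p : nat -> R) (Rv : vtx d -> T -> nat)
  (rho psi : R) :
  (2 <= d)%N ->
  0 < p 0%N < 1 ->
  (forall v k, measurable [set w | Rv v w = k]) ->
  (forall v k, P [set w | Rv v w = k] = (p k)%:E) ->
  (forall (s : seq (vtx d)), uniq s -> forall k : vtx d -> nat,
     P (\bigcap_(v in [set` s]) [set w | Rv v w = k v]) = (\prod_(v <- s) p (k v))%:E) ->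
  (* rho: smallest non-negative root of E(rho^(d^R)) + (1-rho) p_0 = rho *)
  0 <= rho ->
  (Eg p (fun k => (rho ^+ (d ^ k))%R) + ((1 - rho) * p 0%N)%:E = rho%:E)%E ->
  (forall r, 0 <= r -> (Eg p (fun k => (r ^+ (d ^ k))%R) + ((1 - r) * p 0%N)%:E = r%:E)%E ->
     rho <= r) ->
  (* psi: smallest non-negative root of E(psi^(sum_{m=1}^R d^m)) = psi *)
  0 <= psi ->
  Eg p (fun k => (psi ^+ (\sum_(1 <= m < k.+1) d ^ m)%N)%R) = psi%:E ->
  (forall r, 0 <= r -> Eg p (fun k => (r ^+ (\sum_(1 <= m < k.+1) d ^ m)%N)%R) = r%:E ->
     psi <= r) ->
  ((1 - (1 - rho `^ (d.+1%:R / d%:R)) * p 0%N)%R%:E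
     - Eg p (fun k => (rho `^ (d.+1%:R / d%:R * (d ^ k)%:R))%R) <= P (survival Rv))%E /\
  (P (survival Rv) <= 1 - Eg p (fun k => (psi `^ (d.+1%:R / (d - 1)%:R * (d ^ k - 1)%:R))%R))%E.
Proof.
move=> d2 hp0 hmeas hpk hind r0 Hfix Hmin s0 Sfix Smin.
have d0 : (0 < d)%N by apply: leq_trans d2.
split.
- exact: (LB_main _ _ _ _ _ _ _ hmeas hpk hind d0 rho r0 Hfix Hmin).
- exact: (UB_main _ _ _ _ _ _ _ hmeas hpk hind d0 psi d2 s0 Sfix Smin).
Qed.
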